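(* Let $k\in(-\infty,0)\cup\{0,\omega\}\subset S^1$ and let $G^{\uparrow}_k=\{A\in O^{(k)}(4,\mathbb{R}) : a_{00}>0\}$ be the orthochronous subgroup of $O^{(k)}(4,\mathbb{R})$. Then $$\sup\left\{ \frac{|\mathbf{a_v}|}{a_{00}} : A\in G^{\uparrow}_k\right\}=c:=\sqrt{|k|}\in[0,\infty],$$ where by convention $\sqrt{|\omega|}=\infty$. That is, in a temporal linear model of spacetime, whose inertial frames have as transition matrices exactly the elements of $G^{\uparrow}_k$, the supremum of the speeds measured between inertial frames is $c$.
   Context: For $A\in GL(4,\mathbb{R})$ write $A=\begin{pmatrix} a_{00} & \mathbf{a_h}\\ \mathbf{a_v}^t & \hat A\end{pmatrix}$ with $a_{00}\in\mathbb{R}$, $\mathbf{a_h},\mathbf{a_v}\in\mathbb{R}^3$, $\hat A$ a $3\times3$ matrix; $|\mathbf{a_v}|$ is the Euclidean norm. If $A$ is the transition matrix (linear part of the affine coordinate change $(t,x)\mapsto(\bar t,\bar x)$) from a frame $R$ to a frame $\bar R$, the velocity of $R$ measured by $\bar R$ is $\mathbf{v}=\mathbf{a_v}/a_{00}$ and its speed is $|\mathbf{v}|$. Let $S^1=\mathbb{R}\cup\{\omega\}$ (extended real line with $\pm\infty$ identified to $\omega$). For $k\in\mathbb{R}$, $I^{(k)}=\mathrm{diag}(k,1,1,1)$ and $O^{(k)}(4,\mathbb{R})=\{A\in GL(4,\mathbb{R}) : (\det A)^2=1,\ A^tI^{(k)}A=I^{(k)}\}$; $O^{(\omega)}(4,\mathbb{R})=\{A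 : A^t\in O^{(0)}(4,\mathbb{R})\}$. *)

(* Defs.v *)
From HB Require Import structures.
From mathcomp Require Import all_boot all_order all_algebra.
From mathcomp Require Import boolp classical_sets reals constructive_ereal ereal.
Set Implicit Arguments. Unset Strict Implicit. Unset Printing Implicit Defensive.
Import Order.TTheory GRing.Theory Num.Theory.
Local Open Scope ring_scope.
Local Open Scope classical_set_scope.

Inductive S1 (R : Type) := S1fin of R | S1omega.
Arguments S1omega {R}.

Section Defs.
Variable R : realType.

Definition Ik (k : R) : 'M[R]_4 :=
  diag_mx (\row_(i < 4) (if i == ord0 then k else 1)).

Definition Ok (k : R) : set 'M[R]_4 :=
  [set A | A \in unitmx /\ (\det A) ^+ 2 = 1 /\ A^T *m Ik k *m A = Ik k].

Definition OS1 (k : S1 R) : set 'M[R]_4 :=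
  match k with
  | S1fin r => Ok r
  | S1omega => [set A | A \in unitmx /\ Ok 0 A^T]
  end.

Definition Gup (k : S1 R) : set 'M[R]_4 := [set A | OS1 k A /\ 0 < A ord0 ord0].

Definition a00 (A : 'M[R]_4) : R := A ord0 ord0.
Definition av_norm (A : 'M[R]_4) : R :=
  Num.sqrt (\sum_(i < 3) (A (lift ord0 i) ord0) ^+ 2).

Definition cS1 (k : S1 R) : \bar R :=
  match k with
  | S1fin r => (Num.sqrt `|r|)%:E
  | S1omega => +oo%E
  end.

Definition admissible (k : S1 R) : Prop :=
  match k with
  | S1fin r => r <= 0
  | S1omega => True
  end.
End Defs.

(* Main.v *)
Require Import Defs.
From HB Require Import structures.
From mathcomp Require Import all_boot all_order all_algebra.
From mathcomp Require Import boolp classical_sets reals constructive_ereal ereal.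
From mathcomp Require Import ring lra.
Import Order.TTheory GRing.Theory Num.Theory.
Local Open Scope ring_scope.
Local Open Scope classical_set_scope.

Section S.
Variable R : realType.

Definition dk (r : R) (l : 'I_4) : R := if l == ord0 then r else 1.

Lemma prodE (A : 'M[R]_4) r i j :
  (A^T *m Ik r *m A) i j = \sum_l A l i * dk r l * A l j.
Proof.
rewrite /Ik mul_mx_diag !mxE; apply: eq_bigr => l _; rewrite !mxE /dk //.
Qed.

Lemma prodE' (A : 'M[R]_4) r i j :
  (A *m Ik r *m A^T) i j = \sum_l A i l * dk r l * A j l.
Proof.
rewrite /Ik mul_mx_diag !mxE; apply: eq_bigr => l _; rewrite !mxE /dk //.
Qed.

Definition Mb (a b x y : R) : 'M[R]_4 := \matrix_(i, j)
  match (val i, val j) with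
  | (0, 0)%N => a | (0, 1)%N => b | (1, 0)%N => x | (1, 1)%N => y
  | _ => if val i == val j then 1 else 0 end.

Lemma sum4 (F : 'I_4 -> R) : \sum_l F l = F ord0 + F (lift ord0 ord0) + F (lift ord0 (lift ord0 ord0)) + F (lift ord0 (lift ord0 (lift ord0 ord0))).
Proof. by rewrite !big_ord_recl big_ord0 !addrA addr0. Qed.

Lemma Mb_eq r a b x y : r * a ^+ 2 + x ^+ 2 = r -> r * a * b + x * y = 0 ->
  r * b ^+ 2 + y ^+ 2 = 1 -> (Mb a b x y)^T *m Ik r *m Mb a b x y = Ik r.
Proof.
move=> h1 h2 h3; apply/matrixP => i j; rewrite prodE sum4 /Ik !mxE /dk /=.
case: i => [[|[|[|[|i]]]] Hi] //; case: j => [[|[|[|[|j]]]] Hj] //=;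
 rewrite /= ?mxE /=; try lra.
Qed.

Lemma Mb_eq' a x : (Mb a 0 x 1) *m Ik 0 *m (Mb a 0 x 1)^T = Ik 0.
Proof.
apply/matrixP => i j; rewrite prodE' sum4 /Ik !mxE /dk /=.
case: i => [[|[|[|[|i]]]] Hi] //; case: j => [[|[|[|[|j]]]] Hj] //=;
 rewrite /= ?mxE /=; try lra.
Qed.

Lemma Mb_det a x y : \det (Mb a 0 x y) = a * y.
Proof.
rewrite det_trig.
  rewrite !big_ord_recl big_ord0 !mxE /=; lra.
apply/is_trig_mxP => i j.
case: i => [[|[|[|[|i]]]] Hi] //; case: j => [[|[|[|[|j]]]] Hj] //= _;
 rewrite !mxE //.
Qed.

Lemma Mb_av a b x y : av_norm (Mb a b x y : 'M[R]_4) = `|x|.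
Proof.
rewrite /av_norm !big_ord_recl big_ord0 !mxE /= expr0n /= !addr0 sqrtr_sqr //.
Qed.

Lemma Mb_a00 a b x y : a00 (Mb a b x y : 'M[R]_4) = a.
Proof. by rewrite /a00 mxE. Qed.

Lemma det_Ik (r : R) : \det (Ik r) = r.
Proof. rewrite /Ik det_diag !big_ord_recl big_ord0 !mxE /=; lra. Qed.

Lemma in_Ok (r : R) (A : 'M[R]_4) : r != 0 -> A^T *m Ik r *m A = Ik r -> Ok r A.
Proof.
move=> hr hA.
have hd : \det A ^+ 2 = 1.
  have := congr1 determinant hA.
  rewrite !det_mulmx det_tr det_Ik => h.
  apply: (mulIf hr); rewrite mul1r; transitivity (\det A * r * \det A); [ring | exact h].
split; last by [].
rewrite unitmxE unitfE; apply/eqP => h0; move: hd; rewrite h0 expr0n /= => /eqP.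
by rewrite eq_sym oner_eq0.
Qed.

Lemma id_in (k : S1 R) : Gup k (Mb 1 0 0 1).
Proof.
split; last by rewrite mxE /=; lra.
have hu : Mb 1 0 0 1 \in unitmx by rewrite unitmxE Mb_det unitfE mulr1 oner_eq0.
case: k => [r|] /=.
  split; first exact: hu.
  split; first by rewrite Mb_det; lra.
  by apply: Mb_eq; lra.
split; first exact: hu.
split; first by rewrite unitmx_tr.
split; first by rewrite det_tr Mb_det; lra.
by rewrite trmxK Mb_eq'.
Qed.

Lemma ub (r : R) (A : 'M[R]_4) : r <= 0 -> Gup (S1fin r) A -> av_norm A / a00 A <= Num.sqrt `|r|.
Proof.
move=> hr [[_ [_ hA]] ha].
have := congr1 (fun M : 'M[R]_4 => M ord0 ord0) hA; rewrite prodE sum4 /Ik mxE /dk /= mxE /=.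
move: ha; rewrite /av_norm /a00 !big_ord_recl big_ord0 addr0 => ha h.
rewrite ler_pdivrMr // ler0_norm //.
have -> : A ord0 ord0 = Num.sqrt (A ord0 ord0 ^+ 2) by rewrite sqrtr_sqr ger0_norm // ltW.
rewrite -sqrtrM; last lra.
apply: ler_wsqrtr; nra.
Qed.


Lemma boost (c w : R) : 0 < c -> 0 <= w -> w < 1 ->
  exists A, Gup (S1fin (- c^+2)) A /\ av_norm A / a00 A = w * c.
Proof.
move=> hc hw0 hw1.
have hq2 : 0 < 1 - w ^+ 2 by nra.
set q := Num.sqrt (1 - w ^+ 2).
have hq : 0 < q by rewrite sqrtr_gt0.
have hqq : q ^+ 2 = 1 - w ^+ 2 by rewrite sqr_sqrtr // ltW.
set g := q^-1.
have hg : 0 < g by rewrite invr_gt0.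
have hgg : g ^+ 2 * (1 - w ^+ 2) = 1.
  by rewrite -hqq /g exprVn mulVf // expf_neq0 // gt_eqF.
have hc0 : c != 0 by rewrite gt_eqF.
exists (Mb g (g * w / c) (g * w * c) g); split; last first.
  rewrite Mb_av Mb_a00 ger0_norm; last by rewrite !mulr_ge0 // ltW.
  by field; rewrite gt_eqF.
split; last by rewrite mxE /=.
apply: in_Ok; first by rewrite oppr_eq0 expf_neq0.
apply: Mb_eq.
- transitivity (- c ^+ 2 * (g ^+ 2 * (1 - w ^+ 2))); first ring.
  by rewrite hgg mulr1.
- by field.
- transitivity (g ^+ 2 * (1 - w ^+ 2)); last exact: hgg.
  by field.
Qed.

Lemma main_aux (k : S1 R) :
  admissible k ->
  ereal_sup [set ((av_norm A / a00 A)%:E)%E | A in Gup k] = cS1 k.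
Proof.
have h0g (k' : S1 R) : (0%:E <= ereal_sup [set ((av_norm A / a00 A)%:E)%E | A in Gup k'])%E.
  apply: le_ereal_sup_tmp; exists 0%:E => //.
  exists (Mb 1 0 0 1); first exact: id_in.
  by rewrite Mb_av Mb_a00 normr0 mul0r.
case: k => [r|] /= hr.
  have h0 := h0g (S1fin r); set S := [set _ | A in _] in h0 *.
  apply/eqP; rewrite eq_le; apply/andP; split.
    by apply: ge_ereal_sup => _ [A hA <-]; rewrite lee_fin; exact: ub.
  have [r0|rn] := eqVneq r 0.
    by rewrite r0 normr0 sqrtr0.
  set c := Num.sqrt `|r|.
  have hc : 0 < c by rewrite sqrtr_gt0 normr_gt0.
  have hrc : r = - c ^+ 2 by rewrite sqr_sqrtr // ler0_norm // opprK.
  rewrite leNgt; apply/negP => hlt.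
  case E : (ereal_sup S) h0 hlt => [s| |] //; rewrite !lte_fin lee_fin => hs0 hsc.
  have [A [hA hv]] := @boost c ((s + c) / 2 / c) hc ltac:(apply: divr_ge0; lra) ltac:(rewrite ltr_pdivrMr //; lra).
  have : ((av_norm A / a00 A)%:E <= ereal_sup S)%E.
    by apply: ereal_sup_ubound; exists A => //; rewrite hrc.
  rewrite E hv lee_fin => h.
  have : (s + c) / 2 / c * c = (s + c) / 2 by field; rewrite gt_eqF.
  lra.
have h0 := h0g S1omega; set S := [set _ | A in _] in h0 *.
apply/eqP; rewrite eq_le leey /=.
rewrite leNgt; apply/negP => hlt.
case E : (ereal_sup S) h0 hlt => [s| |] //; rewrite lee_fin => hs0 _.
set x := s + 1.
have hx : Gup S1omega (Mb 1 0 x 1).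
  split; last by rewrite mxE /=; lra.
  have hu : Mb 1 0 x 1 \in unitmx by rewrite unitmxE Mb_det unitfE mulr1 oner_eq0.
  split; first exact: hu.
  split; first by rewrite unitmx_tr.
  split; first by rewrite det_tr Mb_det; lra.
  by rewrite trmxK Mb_eq'.
have : ((av_norm (Mb 1 0 x 1) / a00 (Mb 1 0 x 1))%:E <= ereal_sup S)%E.
  by apply: ereal_sup_ubound; exists (Mb 1 0 x 1).
rewrite E Mb_av Mb_a00 divr1 lee_fin ger0_norm /x; lra.
Qed.
End S.

Theorem mainTheorem3 (R : realType) (k : S1 R) :
  admissible k ->
  ereal_sup [set ((av_norm A / a00 A)%:E)%E | A in Gup k] = cS1 k.
Proof. exact: main_aux. Qed.
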